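(* Let $B$ be a skew left brace with associated solution $r_B(a,b)=(\lambda_a(b),\lambda_a(b)^{-1}ab)$, and let $I$ be a proper ideal of $B$ such that $B/I$ is an abelian brace. Let $\mathcal P$ be the set of all left cosets $bI$ ($b\in B$) of $I$ in $B$. Then $(B,r_B)$ is uniformly $\mathcal P$-decomposable, i.e. $r_B(bI\times b'I)=b'I\times bI$ for all $b,b'\in B$. In particular, if $B$ is finite and $|B:I|=n$, then $(B,r_B)$ is uniformly $n$-decomposable.
   Context: A skew left brace (brace) is a set $B$ with two group structures $(B,+)$ and $(B,\cdot)$ with $a(b+c)=ab-a+ac$; $\lambda_a(b)=-a+ab$. An ideal is a subset that is a normal subgroup of both groups and $\lambda_b$-invariant for all $b$ (so its left cosets with respect to $\cdot$ and $+$ coincide). A brace is abelian if $xy=x+y=y+x$ for all elements. A partition is uniform if all blocks have the same cardinality. For a partition $\mathcal P=\{X_i\}$ of $X$, a solution $(X,r)$ is uniformly $\mathcal P$-decomposable if $\mathcal P$ is uniform and $r(X_i\times X_j)=X_j\times X_i$ for all $i,j$; it is uniformly $n$-decomposable if this holds for some uniform partition into $n\ge2$ blocks. *)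

(* Defs.v *)
From mathcomp Require Import all_boot.
From mathcomp Require Import boolp classical_sets cardinality.
Set Implicit Arguments. Unset Strict Implicit. Unset Printing Implicit Defensive.
Local Open Scope classical_set_scope.

Record skew_brace (T : Type) := SkewBrace {
  sb_add : T -> T -> T;  sb_opp : T -> T;  sb_zero : T;
  sb_mul : T -> T -> T;  sb_inv : T -> T;  sb_one : T;
  sb_addA : forall a b c, sb_add a (sb_add b c) = sb_add (sb_add a b) c;
  sb_add0r : forall a, sb_add sb_zero a = a;
  sb_addr0 : forall a, sb_add a sb_zero = a;
  sb_addNr : forall a, sb_add (sb_opp a) a = sb_zero;
  sb_addrN : forall a, sb_add a (sb_opp a) = sb_zero;
  sb_mulA : forall a b c, sb_mul a (sb_mul b c) = sb_mul (sb_mul a b) c;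
  sb_mul1r : forall a, sb_mul sb_one a = a;
  sb_mulr1 : forall a, sb_mul a sb_one = a;
  sb_mulVr : forall a, sb_mul (sb_inv a) a = sb_one;
  sb_mulrV : forall a, sb_mul a (sb_inv a) = sb_one;
  sb_brace : forall a b c,
    sb_mul a (sb_add b c) = sb_add (sb_add (sb_mul a b) (sb_opp a)) (sb_mul a c)
}.

Section Brace.
Variables (T : Type) (B : skew_brace T).
Local Notation "a + b" := (sb_add B a b).
Local Notation "- a" := (sb_opp B a).
Local Notation "a * b" := (sb_mul B a b).
Local Notation "a ^-1" := (sb_inv B a).

Definition lambda (a b : T) : T := - a + a * b.

Definition r_B (p : T * T) : T * T :=
  let a := p.1 in let b := p.2 in (lambda a b, (lambda a b)^-1 * (a * b)).

Definition is_ideal (I : set T) : Prop :=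
  [/\ I (sb_zero B),
      (forall x y, I x -> I y -> I (x + y)),
      (forall x, I x -> I (- x)),
      (forall a x, I x -> I (a + x + - a)) &
      [/\ I (sb_one B),
          (forall x y, I x -> I y -> I (x * y)),
          (forall x, I x -> I (x ^-1)),
          (forall a x, I x -> I (a * x * a ^-1)) &
          (forall b x, I x -> I (lambda b x))]].

Definition proper_ideal (I : set T) : Prop := is_ideal I /\ I != setT.

(* left coset bI (with respect to the multiplicative group; for an ideal it
   coincides with the additive coset b + I) *)
Definition lcoset (I : set T) (b : T) : set T := [set b * x | x in I].

Definition cosets (I : set T) : set (set T) := [set lcoset I b | b in [set: T]].

(* B/I is an abelian brace: (xI)(yI) = (xI)+(yI) = (yI)+(xI), where the
   quotient operations are (xI)(yI) = (xy)I and xI + yI = (x+y)I. *)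
Definition abelian_quotient (I : set T) : Prop :=
  forall x y, lcoset I (x * y) = lcoset I (x + y) /\
              lcoset I (x + y) = lcoset I (y + x).
End Brace.

Definition is_partition (X : Type) (P : set (set X)) : Prop :=
  [/\ (forall A, P A -> A !=set0),
      (forall A A', P A -> P A' -> A `&` A' !=set0 -> A = A') &
      (forall x, exists2 A, P A & A x)].

Definition uniform_partition (X : Type) (P : set (set X)) : Prop :=
  is_partition P /\ (forall A A', P A -> P A' -> (A #= A')%card).

Definition uniformly_P_decomposable (X : Type) (r : X * X -> X * X)
    (P : set (set X)) : Prop :=
  uniform_partition P /\
  (forall Xi Xj, P Xi -> P Xj -> r @` (Xi `*` Xj) = Xj `*` Xi).

Definition uniformly_n_decomposable (X : Type) (r : X * X -> X * X)
    (n : nat) : Prop :=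
  (2 <= n)%N /\
  exists P : set (set X), (P #= `I_n)%card /\ uniformly_P_decomposable r P.

(* Main.v *)
Require Import Defs.
From mathcomp Require Import all_boot.
From mathcomp Require Import boolp classical_sets functions cardinality.
From Stdlib Require Import Setoid Morphisms.
Local Open Scope classical_set_scope.
Set Implicit Arguments. Unset Strict Implicit.

Section Aux.
Variables (T : Type) (B : skew_brace T).
Local Notation "a + b" := (sb_add B a b).
Local Notation "- a" := (sb_opp B a).
Local Notation "a * b" := (sb_mul B a b).
Local Notation "a ^-1" := (sb_inv B a).
Local Notation "0" := (sb_zero B).
Local Notation "1" := (sb_one B).

Lemma addKr a b : - a + (a + b) = b.
Proof. by rewrite sb_addA sb_addNr sb_add0r. Qed.
Lemma addNKr a b : a + (- a + b) = b.
Proof. by rewrite sb_addA sb_addrN sb_add0r. Qed.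
Lemma addrK a b : a + b + - b = a.
Proof. by rewrite -sb_addA sb_addrN sb_addr0. Qed.
Lemma addrNK a b : a + - b + b = a.
Proof. by rewrite -sb_addA sb_addNr sb_addr0. Qed.
Lemma oppU a b : a + b = 0 -> - a = b.
Proof. by move=> h; rewrite -[RHS](addKr a) h sb_addr0. Qed.
Lemma oppK a : - - a = a.
Proof. by apply: oppU; rewrite sb_addNr. Qed.
Lemma oppD a b : - (a + b) = - b + - a.
Proof. by apply: oppU; rewrite -sb_addA (sb_addA _ b) sb_addrN sb_add0r sb_addrN. Qed.

Lemma mulKr a b : a^-1 * (a * b) = b.
Proof. by rewrite sb_mulA sb_mulVr sb_mul1r. Qed.
Lemma mulVKr a b : a * (a^-1 * b) = b.
Proof. by rewrite sb_mulA sb_mulrV sb_mul1r. Qed.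
Lemma mulrK a b : a * b * b^-1 = a.
Proof. by rewrite -sb_mulA sb_mulrV sb_mulr1. Qed.
Lemma invU a b : a * b = 1 -> a^-1 = b.
Proof. by move=> h; rewrite -[RHS](mulKr a) h sb_mulr1. Qed.
Lemma invK a : (a^-1)^-1 = a.
Proof. by apply: invU; rewrite sb_mulVr. Qed.
Lemma invM a b : (a * b)^-1 = b^-1 * a^-1.
Proof. by apply: invU; rewrite -sb_mulA (sb_mulA _ b) sb_mulrV sb_mul1r sb_mulrV. Qed.

Lemma mulKr_inj a x y : a * x = a * y -> x = y.
Proof. by move=> h; rewrite -(mulKr a x) h mulKr. Qed.

Lemma zero_one : 0 = 1.
Proof.
have := sb_brace B 1 0 0; rewrite !sb_mul1r !sb_addr0 sb_add0r => h.
have h0 : - 0 = 0 by apply: oppU; rewrite sb_addr0.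
by rewrite -[1]oppK -h h0.
Qed.

Variable I : set T.
Hypothesis HI : is_ideal B I.

Definition E x y := I (x^-1 * y).

Lemma I0 : I 0. Proof. by move: HI; rewrite /is_ideal => -[]. Qed.
Lemma I1 : I 1. Proof. by move: HI; rewrite /is_ideal => -[_ _ _ _ []]. Qed.
Lemma IadD x y : I x -> I y -> I (x + y).
Proof. by move: HI; rewrite /is_ideal => -[_ h _ _ _]; apply: h. Qed.
Lemma IN x : I x -> I (- x).
Proof. by move: HI; rewrite /is_ideal => -[_ _ h _ _]; apply: h. Qed.
Lemma IadJ a x : I x -> I (a + x + - a).
Proof. by move: HI; rewrite /is_ideal => -[_ _ _ h _]; apply: h. Qed.
Lemma IM x y : I x -> I y -> I (x * y).
Proof. by move: HI; rewrite /is_ideal => -[_ _ _ _ [_ h _ _ _]]; apply: h. Qed.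
Lemma IV x : I x -> I (x^-1).
Proof. by move: HI; rewrite /is_ideal => -[_ _ _ _ [_ _ h _ _]]; apply: h. Qed.
Lemma IJ a x : I x -> I (a * x * a^-1).
Proof. by move: HI; rewrite /is_ideal => -[_ _ _ _ [_ _ _ h _]]; apply: h. Qed.
Lemma Ilam b x : I x -> I (lambda B b x).
Proof. by move: HI; rewrite /is_ideal => -[_ _ _ _ [_ _ _ _ h]]; apply: h. Qed.

Lemma E_add x y : E x y <-> I (- x + y).
Proof.
split=> h.
- have -> : - x + y = lambda B x (x^-1 * y) by rewrite /lambda mulVKr.
  exact: Ilam.
- rewrite /E -[y](addNKr x) sb_brace sb_mulVr -zero_one sb_add0r.
  exact: Ilam.
Qed.

Lemma E_refl x : E x x. Proof. by rewrite /E sb_mulVr; exact: I1. Qed.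
Lemma E_sym x y : E x y -> E y x.
Proof. by move=> h; rewrite /E -[x]invK -invM; exact: IV. Qed.
Lemma E_trans x y z : E x y -> E y z -> E x z.
Proof. by move=> h1 h2; rewrite /E -(mulVKr y z) sb_mulA; exact: IM. Qed.

Global Instance E_equiv : Equivalence E.
Proof. split; [exact: E_refl|exact: E_sym|exact: E_trans]. Qed.

Global Instance mul_proper : Proper (E ==> E ==> E) (sb_mul B).
Proof.
move=> x x' hx y y' hy; apply: (@E_trans _ (x * y') _).
- by rewrite /E invM -sb_mulA mulKr.
- rewrite /E invM -sb_mulA; have := IJ (y'^-1) hx; rewrite invK.
  by rewrite !sb_mulA.
Qed.

Global Instance inv_proper : Proper (E ==> E) (sb_inv B).
Proof.
move=> x y h; rewrite /E invK.
have := IJ x (IV h); rewrite invM invK -!sb_mulA sb_mulrV sb_mulr1.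
by [].
Qed.

Global Instance add_proper : Proper (E ==> E ==> E) (sb_add B).
Proof.
move=> x x' hx y y' hy; apply: (@E_trans _ (x + y') _); apply/E_add.
- by rewrite oppD -sb_addA addKr; apply/E_add.
- rewrite !oppD; move/E_add: hx => /(IadJ (- y')).
  by rewrite oppK !sb_addA.
Qed.

Global Instance opp_proper : Proper (E ==> E) (sb_opp B).
Proof.
move=> x y /E_add h; apply/E_add; rewrite oppK.
by have := IadJ x (IN h); rewrite oppD oppK -sb_addA addrK.
Qed.

Lemma in_lcoset b y : lcoset B I b y <-> E b y.
Proof.
split; first by case=> x hx <-; rewrite /E mulKr.
by move=> h; exists (b^-1 * y) => //; rewrite mulVKr.
Qed.

Lemma lcosetE b b' : E b b' -> lcoset B I b = lcoset B I b'.
Proof.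
move=> h; apply/seteqP; split=> y /in_lcoset hy; apply/in_lcoset.
- by rewrite -h.
- by rewrite h.
Qed.

Hypothesis HA : abelian_quotient B I.

Lemma Emul_add x y : E (x * y) (x + y).
Proof.
have [h _] := HA x y; apply: E_sym; apply/in_lcoset; rewrite -h.
by apply/in_lcoset; apply: E_refl.
Qed.

Lemma Eadd_comm x y : E (x + y) (y + x).
Proof.
have [_ h] := HA x y; apply: E_sym; apply/in_lcoset; rewrite -h.
by apply/in_lcoset; apply: E_refl.
Qed.

Lemma Emul_comm x y : E (x * y) (y * x).
Proof.
apply: (E_trans (Emul_add x y)); apply: (E_trans (Eadd_comm x y)).
exact: E_sym (Emul_add y x).
Qed.

Lemma decomp b b' :
  r_B B @` (lcoset B I b `*` lcoset B I b') = lcoset B I b' `*` lcoset B I b.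
Proof.
apply/seteqP; split.
- move=> _ [[a c] [/= /in_lcoset ha /in_lcoset hc] <-].
  have hl : E (lambda B a c) c.
    by rewrite /lambda (Emul_add a c) addKr; apply: E_refl.
  split => /=; apply/in_lcoset.
  + by rewrite hl.
  + by rewrite hl (Emul_comm a c) mulKr.
- move=> [u v] [/= /in_lcoset hu /in_lcoset hv].
  have ha : E (u * v + - u) v.
    by rewrite (Emul_add u v) (Eadd_comm u v) addrK; apply: E_refl.
  exists (u * v + - u, (u * v + - u)^-1 * (u * v)).
    split; apply/in_lcoset => /=; first by rewrite ha.
    by rewrite ha (Emul_comm u v) mulKr.
  by rewrite /r_B /lambda /= mulVKr oppD oppK addrNK mulKr.
Qed.

End Aux.

Lemma inv1 T (B : skew_brace T) : sb_inv B (sb_one B) = sb_one B.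
Proof. by apply: invU; rewrite sb_mul1r. Qed.

Theorem corollary4p15 (T : Type) (B : skew_brace T) (I : set T) :
  proper_ideal B I -> abelian_quotient B I ->
  uniformly_P_decomposable (r_B B) (cosets B I) /\
  (forall n : nat, finite_set [set: T] -> (cosets B I #= `I_n)%card ->
     uniformly_n_decomposable (r_B B) n).
Proof.
move=> [HI HneT] HA.
have part : is_partition (cosets B I).
  split.
  - move=> _ [b _ <-]; exists b; apply/in_lcoset; exact: E_refl.
  - move=> _ _ [b _ <-] [b' _ <-] [z [/in_lcoset h1 /in_lcoset h2]].
    apply: lcosetE => //; exact: E_trans h1 (E_sym HI h2).
  - move=> x; exists (lcoset B I x); first by exists x.
    apply/in_lcoset; exact: E_refl.
have unif : forall b b', (lcoset B I b #= lcoset B I b')%card.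
  move=> b b'.
  pose f := fun y => sb_mul B b' (sb_mul B (sb_inv B b) y).
  have hb : set_bij (lcoset B I b) (lcoset B I b') f.
    split.
    - move=> y /in_lcoset hy; apply/in_lcoset; by rewrite /E /f mulKr.
    - move=> y z _ _; rewrite /f => h.
      by have := congr1 (sb_mul B b) (mulKr_inj h); rewrite !mulVKr.
    - move=> z /in_lcoset hz; exists (sb_mul B b (sb_mul B (sb_inv B b') z)).
        by apply/in_lcoset; rewrite /E mulKr.
      by rewrite /f mulKr mulVKr.
  exact: pcard_eq (bij_of_set_bijection hb).
have PD : uniformly_P_decomposable (r_B B) (cosets B I).
  split; first split => //.
  - by move=> _ _ [b _ <-] [b' _ <-]; apply: unif.
  - by move=> _ _ [b _ <-] [b' _ <-]; apply: decomp.
split => // n _ hc; split; last by exists (cosets B I).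
have [t nt] : exists t, ~ I t.
  apply/existsNP => hall; move/eqP: HneT; apply.
  by apply/seteqP; split=> x //= _; apply: hall.
have [f [ff fi _]] := card_set_bijP hc.
have c1 : cosets B I (lcoset B I (sb_one B)) by exists (sb_one B).
have c2 : cosets B I (lcoset B I t) by exists t.
have hne : lcoset B I (sb_one B) <> lcoset B I t.
  move=> h; apply: nt.
  have : lcoset B I t t by apply/in_lcoset; exact: E_refl.
  by rewrite -h => /in_lcoset; rewrite /E inv1 sb_mul1r.
have l1 := ff _ c1; have l2 := ff _ c2.
have neq : f (lcoset B I (sb_one B)) <> f (lcoset B I t).
  by move=> h; apply: hne; apply: fi => //; rewrite ?inE.
have {}l1 : (f (lcoset B I (sb_one B)) < n)%N by exact: l1.
have {}l2 : (f (lcoset B I t) < n)%N by exact: l2.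
case: n hc f ff fi l1 l2 neq => [|[|n]] // hc f ff fi l1 l2 neq.
by exfalso; apply: neq; move: l1 l2; rewrite !ltnS !leqn0 => /eqP -> /eqP ->.
Qed.
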